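(* Let $\mathbb{K}\in\{\mathbb{R},\mathbb{C}\}$, let $B$ be a commutative Banach algebra over $\mathbb{K}$, $(\omega_k)_{k\in\mathbb{N}}$ a convex growth family and $(\mathcal{H},\Sigma)$ a combinatorial Hopf algebra such that $((\mathcal{H},\Sigma),(\omega_k)_k)$ is a control pair. Then the space $\ell^\infty_{\rightarrow}(\mathcal{H},B)$ of controlled linear maps is a locally convex unital topological algebra with respect to the convolution product $\phi\star\psi=m_B\circ(\phi\otimes\psi)\circ\Delta$, with unit $1_B\cdot\epsilon$.
   Context: A growth family is a family $(\omega_k)_{k\in\mathbb{N}}$ of functions $\omega_k\colon\mathbb{N}_0\to\mathbb{N}$ with (W1) $\omega_k(0)=1$, $\omega_k(n)\le\omega_{k+1}(n)$; (W2) $\omega_k(n)\omega_k(m)\le\omega_k(n+m)$; (W3) for every $k_1$ there is $k_2\ge k_1$ with $\omega_{k_2}(n)\ge2^n\omega_{k_1}(n)$ for all $n$; convex means: for each $k_1$ one can choose such $k_2$ so that additionally for every $k_3\ge k_2$ some $\alpha\in]0,1[$ satisfies $\omega_{k_1}(n)^\alpha\omega_{k_3}(n)^{1-\alpha}\le\omega_{k_2}(n)$ for all $n$. For a set $J$ graded by $|\cdot|\colon J\to\mathbb{N}_0$: $\ell^1_k(J)$ = formal sums $\sum c_\tau\tau$ with $\sum|c_\tau|\omega_k(|\tau|)<\infty$, $\ell^1_{\leftarrow}(J)=\bigcap_k\ell^1_k(J)$ (projective limit topology); $\ell^\infty_k(J,B)$ = maps $f\colon J\to B$ with $\sup_\tau\|f(\tau)\|/\omega_k(|\tau|)<\infty$,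 $\ell^\infty_{\rightarrow}(J,B)=\bigcup_k\ell^\infty_k(J,B)$ with direct limit topology. A commutative Banach algebra is unital, commutative, with complete submultiplicative norm and $\|1_B\|=1$. A combinatorial Hopf algebra $(\mathcal{H},\Sigma)$ is a graded connected Hopf algebra $\mathcal{H}$ over $\mathbb{K}$ (coproduct $\Delta$, counit $\epsilon$, antipode $S$) together with $\Sigma\subseteq\mathcal{H}$ such that $\mathcal{H}$ is as an algebra (via a fixed isomorphism) the commutative polynomial algebra $\mathbb{K}[\Sigma]$ or the noncommutative polynomial algebra $\mathbb{K}\langle\Sigma\rangle$, $\Sigma$ graded by the Hopf grading. Let $M$ be the free commutative monoid resp. free monoid on $\Sigma$ (graded by sums of degrees), so $\mathcal{H}=\mathbb{K}^{(M)}$ and $\mathcal{H}\otimes\mathcal{H}=\mathbb{K}^{(M\times M)}$ with $|(\mu,\sigma)|=|\mu|+|\sigma|$. $((\mathcal{H},\Sigma),(\omega_k))$ is a control pair if $\Delta$ and $S$ extend to continuous linear maps $\ell^1_{\leftarrow}(M)\to\ell^1_{\leftarrow}(M\times M)$ resp. $\ell^1_{\leftarrow}(M)\to\ell^1_{\leftarrow}(M)$. A linear map $\phi\colon\mathcal{H}\to B$ is controlled if $\phi|_M\in\ell^\infty_{\rightarrow}(M,B)$; the space $\ell^\infty_{\rightarrow}(\mathcal{H},B)$ of controlled linear maps is identified with $\ell^\infty_{\rightarrow}(M,B)$ as a locally convex space. *)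

(* Defs.v *)
From HB Require Import structures.
From mathcomp Require Import all_boot all_order all_algebra.
From mathcomp Require Import all_classical all_reals all_analysis.
From mathcomp Require Import complex.
From mathcomp Require Import finmap multiset.

Set Implicit Arguments.
Unset Strict Implicit.
Unset Printing Implicit Defensive.

Import Order.TTheory GRing.Theory Num.Theory.
Local Open Scope ring_scope.
Local Open Scope classical_set_scope.

Definition scal_field (R : realType) (cplx : bool) : numFieldType :=
  if cplx then (R[i] : numFieldType) else (R : numFieldType).

Definition knorm (R : realType) (cplx : bool) : scal_field R cplx -> R :=
  match cplx return scal_field R cplx -> R with
  | true => fun z : R[i] => complex.Re `|z|
  | false => fun x : R => `|x|
  end.

(* w k n stands for omega_k(n); omega_k : N_0 -> N = {1,2,...}.        *)
Definition growth_family (w : nat -> nat -> nat) : Prop :=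
  [/\ (forall k n, (0 < w k n)%N),
      (forall k, w k 0%N = 1%N),
      (forall k n, (w k n <= w k.+1 n)%N),
      (forall k n m, (w k n * w k m <= w k (n + m))%N)
    & (forall k1, exists k2, (k1 <= k2)%N /\
          forall n, (2 ^ n * w k1 n <= w k2 n)%N) ].

Definition convex_growth (R : realType) (w : nat -> nat -> nat) : Prop :=
  forall k1, exists k2, [/\ (k1 <= k2)%N,
    (forall n, (2 ^ n * w k1 n <= w k2 n)%N) &
    forall k3, (k2 <= k3)%N -> exists alpha : R, 0 < alpha < 1 /\
      forall n, ((w k1 n)%:R `^ alpha * (w k3 n)%:R `^ (1 - alpha)
                 <= (w k2 n)%:R :> R) ].

Section L1.
Variables (R : realType) (cplx : bool).
Local Notation K := (scal_field R cplx).
Variables (J : choiceType) (gr : J -> nat) (w : nat -> nat -> nat).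

Definition l1norm (k : nat) (c : J -> K) : \bar R :=
  (\esum_(t in [set: J]) ((knorm (c t)) * (w k (gr t))%:R)%:E)%E.

Definition in_l1 (k : nat) (c : J -> K) : Prop := (l1norm k c < +oo)%E.

Definition in_l1_proj (c : J -> K) : Prop := forall k, in_l1 k c.

(* finitely supported formal sums = elements of K^(J) *)
Definition fin_supp (c : J -> K) : Prop := finite_set [set t | c t != 0].
End L1.

(* A linear map K^(J1) -> K^(J2) given on the basis J1 by the coefficient
   function f (f t u = coefficient of u in the image of t) extends to a
   continuous linear map l^1_<-(J1) -> l^1_<-(J2) (projective limit
   topologies; since the norms ||.||_k increase with k, the sets
   {c' | ||c' - c||_k < d} form a neighbourhood base of c).              *)
Definition extends_continuously (R : realType) (cplx : bool)
  (J1 J2 : choiceType) (gr1 : J1 -> nat) (gr2 : J2 -> nat)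
  (w : nat -> nat -> nat) (f : J1 -> J2 -> scal_field R cplx) : Prop :=
  exists T : (J1 -> scal_field R cplx) -> (J2 -> scal_field R cplx),
  [/\ (forall c, in_l1_proj gr1 w c -> in_l1_proj gr2 w (T c)),
      (forall a c c', in_l1_proj gr1 w c -> in_l1_proj gr1 w c' ->
         T (fun t => a * c t + c' t) = (fun u => a * T c u + T c' u)),
      (forall h, fin_supp h ->
         T h = (fun u => \sum_(t \in [set: J1]) h t * f t u)) &
      (forall c k (e : R), in_l1_proj gr1 w c -> 0 < e ->
         exists k' (d : R), 0 < d /\
         forall c', in_l1_proj gr1 w c' ->
           (l1norm gr1 w k' (fun t => (c' t - c t)%R) < d%:E)%E ->
           (l1norm gr2 w k (fun u => (T c' u - T c u)%R) < e%:E)%E) ].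

(* The monoid M: free commutative monoid (comm = true, multisets) or   *)
(* free monoid (comm = false, words) on the set Sigma of generators.   *)
Definition mon (comm : bool) (S : choiceType) : choiceType :=
  if comm then ({mset S}%mset : choiceType) else (seq S : choiceType).

Definition mon_one (comm : bool) (S : choiceType) : mon comm S :=
  match comm return mon comm S with
  | true => (mset0 : {mset S}%mset)
  | false => ([::] : seq S)
  end.

Definition mon_mul (comm : bool) (S : choiceType) :
  mon comm S -> mon comm S -> mon comm S :=
  match comm return mon comm S -> mon comm S -> mon comm S with
  | true => fun a b : {mset S}%mset => msetD a b
  | false => fun a b : seq S => a ++ b
  end.

Definition mon_deg (comm : bool) (S : choiceType) (deg : S -> nat) :
  mon comm S -> nat :=
  match comm return mon comm S -> nat with
  | true => fun A : {mset S}%mset => (\sum_(x <- finsupp A) A x * deg x)%N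
  | false => fun s : seq S => (\sum_(x <- s) deg x)%N
  end.

(* Combinatorial Hopf algebra (H, Sigma), H = K[Sigma] or K<Sigma>     *)
(* with basis M.  Structure maps given by their matrices on M:          *)
(*   Delta(mu) = sum_{nu,sg} D mu nu sg  nu (x) sg                      *)
(*   eps(mu)   = ep mu                                                  *)
(*   S(mu)     = sum_rho Sa mu rho  rho                                 *)
Definition indK (K : numFieldType) (b : bool) : K := b%:R.

Section Hopf.
Variables (K : numFieldType) (comm : bool) (S : choiceType) (deg : S -> nat).
Local Notation M := (mon comm S).
Local Notation one := (mon_one comm S).
Local Notation mul := (@mon_mul comm S).
Local Notation dg := (@mon_deg comm S deg).
Local Notation ind := (@indK K).

Definition comb_hopf (D : M -> M -> M -> K) (ep : M -> K) (Sa : M -> M -> K)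
  : Prop :=
  (   (* Delta, S take values in K^(M x M), K^(M) *)
   (forall mu, finite_set [set p : M * M | D mu p.1 p.2 != 0]) /\
   (forall mu, finite_set [set r : M | Sa mu r != 0]) /\
   (forall mu a b c, \sum_(n \in [set: M]) D mu n c * D n a b
                   = \sum_(s \in [set: M]) D mu a s * D s b c) /\
   (forall mu s, \sum_(n \in [set: M]) ep n * D mu n s = ind (s == mu))
     /\ (forall mu n, \sum_(s \in [set: M]) D mu n s * ep s = ind (n == mu)) /\
   (* Delta is an algebra morphism H -> H (x) H *)
   (forall mu mu' a b, D (mul mu mu') a b =
      \sum_(n \in [set: M]) \sum_(s \in [set: M]) \sum_(n' \in [set: M])
        \sum_(s' \in [set: M])
          D mu n s * D mu' n' s' * ind ((mul n n' == a) && (mul s s' == b)))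
     /\ (forall a b, D one a b = ind ((a == one) && (b == one))) /\
   (forall mu mu', ep (mul mu mu') = ep mu * ep mu') /\ ep one = 1 /\
   (* antipode: m (S (x) id) Delta = eta eps = m (id (x) S) Delta *)
   (forall mu c,
      \sum_(n \in [set: M]) \sum_(s \in [set: M])
         D mu n s * (\sum_(r \in [set: M]) Sa n r * ind (mul r s == c))
      = ep mu * ind (c == one))
     /\ (forall mu c,
      \sum_(n \in [set: M]) \sum_(s \in [set: M])
         D mu n s * (\sum_(r \in [set: M]) Sa s r * ind (mul n r == c))
      = ep mu * ind (c == one)) /\
   (forall mu n s, D mu n s != 0 -> (dg n + dg s)%N = dg mu) /\
   (forall mu, ep mu != 0 -> dg mu = 0%N) /\
   (* connected: H_0 = K 1 *)
   (forall mu, dg mu = 0%N -> mu = one)).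
End Hopf.

Definition comm_banach_alg (K : numFieldType) (B : completeNormedModType K)
  (mul : B -> B -> B) (one : B) : Prop :=
  [/\ associative mul, commutative mul, left_id one mul,
      (forall (a : K) x y z, mul (a *: x + y) z = a *: mul x z + mul y z) &
      (forall x y, `|mul x y| <= `|x| * `|y|) /\ `|one| = 1 ].

Section Controlled.
Variables (K : numFieldType) (M : choiceType) (gr : M -> nat)
  (w : nat -> nat -> nat) (B : normedModType K).

Definition bounded_by (k : nat) (C : K) (f : M -> B) : Prop :=
  forall t, `|f t| <= C * (w k (gr t))%:R.

Definition controlled (f : M -> B) : Prop := exists k C, bounded_by k C f.

Definition abs_convex (V : set (M -> B)) : Prop :=
  forall (a b : K) f g, V f -> V g -> `|a| + `|b| <= 1 ->
    V (fun t => a *: f t + b *: g t).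

(* U is a 0-neighbourhood of the locally convex inductive (direct) limit
   topology on l^oo_->(M,B): U contains an absolutely convex subset V of
   l^oo_->(M,B) whose trace on every step l^oo_k(M,B) contains a ball.  *)
Definition ind_nbhd0 (U : set (M -> B)) : Prop :=
  exists V : set (M -> B), [/\ V `<=` U, V `<=` controlled, abs_convex V &
    forall k, exists e : K, 0 < e /\ forall f, bounded_by k e f -> V f ].
End Controlled.

Section Conv.
Variables (K : numFieldType) (M : choiceType) (B : normedModType K)
  (D : M -> M -> M -> K) (mulB : B -> B -> B).

Definition hconv (phi psi : M -> B) : M -> B :=
  fun mu => \sum_(p \in [set: M * M]) D mu p.1 p.2 *: mulB (phi p.1) (psi p.2).
End Conv.

Definition lc_unital_top_alg (K : numFieldType) (M : choiceType)
  (gr : M -> nat) (w : nat -> nat -> nat) (B : normedModType K)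
  (star : (M -> B) -> (M -> B) -> (M -> B)) (e : M -> B) : Prop :=
  let E := controlled gr w (B := B) in
  [/\ (forall f g, E f -> E g -> E (star f g)) /\ E e,
      (forall f g h, E f -> E g -> E h -> star (star f g) h = star f (star g h)),
      (forall f, E f -> star e f = f /\ star f e = f),
      ((forall (a : K) f f' g, E f -> E f' -> E g ->
         star (fun t => a *: f t + f' t) g
         = (fun t => a *: star f g t + star f' g t)) /\
      (forall (a : K) f g g', E f -> E g -> E g' ->
         star f (fun t => a *: g t + g' t)
         = (fun t => a *: star f g t + star f g' t))) &
      (forall f g, E f -> E g -> forall W, ind_nbhd0 gr w W ->
         exists U V, [/\ ind_nbhd0 gr w U, ind_nbhd0 gr w V &
           forall u v, E u -> E v -> U u -> V v ->
             W (fun t => star (fun x => f x + u x) (fun x => g x + v x) t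
                         - star f g t)]) ].

(* Main.v *)
Require Import Defs.
From HB Require Import structures.
From mathcomp Require Import all_boot all_order all_algebra.
From mathcomp Require Import all_classical all_reals all_analysis.
From mathcomp Require Import complex.
From mathcomp Require Import finmap multiset.
From mathcomp Require Import ring lra.
Import Order.TTheory GRing.Theory Num.Theory.
Local Open Scope ring_scope.

Set Implicit Arguments.
Unset Strict Implicit.
Unset Printing Implicit Defensive.

Lemma fsumT_seq (V : zmodType) (T : choiceType) (r : seq T) (F : T -> V) :
  uniq r -> (forall i, i \notin r -> F i = 0) ->
  \sum_(i \in [set: T]) F i = \sum_(i <- r) F i.
Proof.
move=> ur Fr; rewrite (fsbigE r) //.
by apply: eq_bigl => i; rewrite in_setT.
by move=> i _; apply: Fr.
Qed.

Definition compo (M : choiceType) (S : seq (M * M)) : seq M :=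
  undup ([seq p.1 | p <- S] ++ [seq p.2 | p <- S]).

Lemma compo_uniq (M : choiceType) (S : seq (M * M)) : uniq (compo S).
Proof. exact: undup_uniq. Qed.

Lemma compo1 (M : choiceType) (S : seq (M * M)) p : p \in S -> p.1 \in compo S.
Proof. by move=> pS; rewrite mem_undup mem_cat map_f. Qed.

Lemma compo2 (M : choiceType) (S : seq (M * M)) p : p \in S -> p.2 \in compo S.
Proof. by move=> pS; rewrite mem_undup mem_cat orbC map_f. Qed.

Lemma big_pairU (V : zmodType) (M : choiceType) (S : seq (M * M)) (U : seq M)
  (F : M -> M -> V) : uniq S -> uniq U ->
  (forall p, p \in S -> (p.1 \in U) && (p.2 \in U)) ->
  (forall p, p \notin S -> F p.1 p.2 = 0) ->
  \sum_(p <- S) F p.1 p.2 = \sum_(n <- U) \sum_(s <- U) F n s.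
Proof.
move=> uS uU SU FS.
rewrite -(@fsumT_seq _ _ S (fun p => F p.1 p.2)) //.
rewrite -(big_allpairs (F := fun p => F p.1 p.2)).
rewrite (@fsumT_seq _ _ [seq (i1, i2) | i1 <- U, i2 <- U]) //.
  by apply: allpairs_uniq => // -[a b] [c d] _ _ /= [-> ->].
move=> [a b] H; apply: FS; apply: contra H => /SU /andP[Ha Hb].
by apply/allpairsP; exists (a, b).
Qed.

Set Implicit Arguments.
Unset Strict Implicit.
Unset Printing Implicit Defensive.

Section Gen.
Variables (K : numFieldType) (M : choiceType) (gr : M -> nat)
  (w : nat -> nat -> nat) (B : normedModType K) (mulB : B -> B -> B)
  (oneB : B) (D : M -> M -> M -> K) (ep : M -> K) (one : M).
Hypothesis mulA : associative mulB.
Hypothesis mulC : commutative mulB.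
Hypothesis mul1 : left_id oneB mulB.
Hypothesis mulDl : forall (a : K) x y z, mulB (a *: x + y) z = a *: mulB x z + mulB y z.
Hypothesis Dfin : forall mu, finite_set [set p : M * M | D mu p.1 p.2 != 0].
Hypothesis coass : forall mu a b c, \sum_(n \in [set: M]) D mu n c * D n a b
                   = \sum_(s \in [set: M]) D mu a s * D s b c.
Hypothesis counitl : forall mu s, \sum_(n \in [set: M]) ep n * D mu n s = indK K (s == mu).
Hypothesis counitr : forall mu n, \sum_(s \in [set: M]) D mu n s * ep s = indK K (n == mu).

Definition Sd mu : {fset (M * M)} := fset_set [set p : M * M | D mu p.1 p.2 != 0].

Lemma Sd_uniq mu : uniq (Sd mu).
Proof. exact: fset_uniq. Qed.

Lemma in_Sd mu p : (p \in Sd mu) = (D mu p.1 p.2 != 0).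
Proof. rewrite /Sd in_fset_set; last exact: Dfin. by rewrite mem_setE. Qed.

Lemma notin_Sd mu p : p \notin Sd mu -> D mu p.1 p.2 = 0.
Proof. by rewrite in_Sd negbK => /eqP. Qed.

Local Notation star := (hconv D mulB).

Lemma hconvE f g mu : star f g mu = \sum_(p <- Sd mu) D mu p.1 p.2 *: mulB (f p.1) (g p.2).
Proof.
rewrite /hconv (@fsumT_seq _ _ (Sd mu)) ?Sd_uniq //.
by move=> p /notin_Sd ->; rewrite scale0r.
Qed.

Lemma mul0B z : mulB 0 z = 0.
Proof.
have := mulDl 1 0 0 z; rewrite scaler0 addr0 scale1r => h.
by apply: (addrI (mulB 0 z)); rewrite addr0 -h.
Qed.

Lemma mulBDl x y z : mulB (x + y) z = mulB x z + mulB y z.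
Proof. by have := mulDl 1 x y z; rewrite !scale1r. Qed.

Lemma mulBZl a x z : mulB (a *: x) z = a *: mulB x z.
Proof. by have := mulDl a x 0 z; rewrite addr0 mul0B addr0. Qed.

Lemma mulBDr x y z : mulB z (x + y) = mulB z x + mulB z y.
Proof. by rewrite mulC mulBDl !(mulC z). Qed.

Lemma mulBZr a x z : mulB z (a *: x) = a *: mulB z x.
Proof. by rewrite mulC mulBZl mulC. Qed.

Lemma mulB1 x : mulB x oneB = x.
Proof. by rewrite mulC mul1. Qed.

Lemma mulB_suml (I : Type) (r : seq I) (F : I -> B) z :
  mulB (\sum_(i <- r) F i) z = \sum_(i <- r) mulB (F i) z.
Proof.
elim: r => [|x r IH]; first by rewrite !big_nil mul0B.
by rewrite !big_cons mulBDl IH.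
Qed.

Lemma mulB_sumr (I : Type) (r : seq I) (F : I -> B) z :
  mulB z (\sum_(i <- r) F i) = \sum_(i <- r) mulB z (F i).
Proof. by rewrite mulC mulB_suml; apply: eq_bigr => i _; rewrite mulC. Qed.

Lemma hconv_linl a b x y z :
  star (fun t => a *: x t + b *: y t) z = fun mu => a *: star x z mu + b *: star y z mu.
Proof.
apply: funext => mu; rewrite !hconvE !scaler_sumr -big_split /=.
apply: eq_bigr => p _; rewrite mulBDl !mulBZl scalerDr !scalerA.
by rewrite (mulrC a) (mulrC b).
Qed.

Lemma hconv_linr a b x y z :
  star z (fun t => a *: x t + b *: y t) = fun mu => a *: star z x mu + b *: star z y mu.
Proof.
apply: funext => mu; rewrite !hconvE !scaler_sumr -big_split /=.
apply: eq_bigr => p _; rewrite mulBDr !mulBZr scalerDr !scalerA.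
by rewrite (mulrC a) (mulrC b).
Qed.

Lemma Sd_compo1 mu n s : D mu n s != 0 -> n \in compo (Sd mu).
Proof. by move=> h; apply: (@compo1 _ _ (n, s)); rewrite in_Sd. Qed.

Lemma Sd_compo2 mu n s : D mu n s != 0 -> s \in compo (Sd mu).
Proof. by move=> h; apply: (@compo2 _ _ (n, s)); rewrite in_Sd. Qed.

Lemma sum_ind (V : lmodType K) (U : seq M) (x : M) (F : M -> V) :
  uniq U -> x \in U -> \sum_(s <- U) indK K (s == x) *: F s = F x.
Proof.
move=> uU xU; rewrite (bigD1_seq x) //= eqxx /indK scale1r big1 ?addr0 //.
by move=> i /negbTE ->; rewrite scale0r.
Qed.
End Gen.

Section Gen2.
Variables (K : numFieldType) (M : choiceType) (gr : M -> nat)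
  (w : nat -> nat -> nat) (B : normedModType K) (mulB : B -> B -> B)
  (oneB : B) (D : M -> M -> M -> K) (ep : M -> K) (one : M).
Hypothesis mulA : associative mulB.
Hypothesis mulC : commutative mulB.
Hypothesis mul1 : left_id oneB mulB.
Hypothesis mulDl : forall (a : K) x y z, mulB (a *: x + y) z = a *: mulB x z + mulB y z.
Hypothesis Dfin : forall mu, finite_set [set p : M * M | D mu p.1 p.2 != 0].
Hypothesis coass : forall mu a b c, \sum_(n \in [set: M]) D mu n c * D n a b
                   = \sum_(s \in [set: M]) D mu a s * D s b c.
Hypothesis counitl : forall mu s, \sum_(n \in [set: M]) ep n * D mu n s = indK K (s == mu).
Hypothesis counitr : forall mu n, \sum_(s \in [set: M]) D mu n s * ep s = indK K (n == mu).

Local Notation star := (hconv D mulB).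
Local Notation Sd := (Sd D).

Lemma hconv_unitl f : star (fun mu => ep mu *: oneB) f = f.
Proof.
apply: funext => mu; rewrite (hconvE mulB Dfin).
pose U := undup (mu :: compo (Sd mu)).
have uU : uniq U by apply: undup_uniq.
rewrite (@big_pairU _ _ _ U (fun n s => D mu n s *: mulB (ep n *: oneB) (f s))) ?fset_uniq //; last first.
  by move=> p /(notin_Sd Dfin) ->; rewrite scale0r.
  by move=> p pS; rewrite !mem_undup !inE (compo1 pS) (compo2 pS) !orbT.
rewrite exchange_big /=.
under eq_bigr => s _ do under eq_bigr => n _ do rewrite (mulBZl mulDl) mul1 scalerA.
under eq_bigr => s _ do rewrite -scaler_suml.
rewrite -[RHS](@sum_ind _ _ _ U mu f) //; last by rewrite mem_undup inE eqxx.
apply: eq_bigr => s _; congr (_ *: _).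
rewrite -(counitl mu s) (@fsumT_seq _ _ U) //.
  by apply: eq_bigr => n _; rewrite mulrC.
move=> n nU; apply/eqP; rewrite mulf_eq0; apply/orP; right; apply: contraR nU => h.
by rewrite mem_undup inE (Sd_compo1 Dfin h) orbT.
Qed.

Lemma hconv_unitr f : star f (fun mu => ep mu *: oneB) = f.
Proof.
apply: funext => mu; rewrite (hconvE mulB Dfin).
pose U := undup (mu :: compo (Sd mu)).
have uU : uniq U by apply: undup_uniq.
rewrite (@big_pairU _ _ _ U (fun n s => D mu n s *: mulB (f n) (ep s *: oneB))) ?fset_uniq //; last first.
  by move=> p /(notin_Sd Dfin) ->; rewrite scale0r.
  by move=> p pS; rewrite !mem_undup !inE (compo1 pS) (compo2 pS) !orbT.
under eq_bigr => n _ do under eq_bigr => s _ do rewrite (mulBZr mulC mulDl) (mulB1 mulC mul1) scalerA.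
under eq_bigr => n _ do rewrite -scaler_suml.
rewrite -[RHS](@sum_ind _ _ _ U mu f) //; last by rewrite mem_undup inE eqxx.
apply: eq_bigr => n _; congr (_ *: _).
rewrite -(counitr mu n) (@fsumT_seq _ _ U) //.
move=> s sU; apply/eqP; rewrite mulf_eq0; apply/orP; left; apply: contraR sU => h.
by rewrite mem_undup inE (Sd_compo2 Dfin h) orbT.
Qed.

Lemma sum4_swapL (V : zmodType) (U : seq M) (F : M -> M -> M -> M -> V) :
  \sum_(n <- U) \sum_(c <- U) \sum_(a <- U) \sum_(b <- U) F n c a b =
  \sum_(a <- U) \sum_(b <- U) \sum_(c <- U) \sum_(n <- U) F n c a b.
Proof.
rewrite exchange_big /=.
under eq_bigr => c _ do rewrite exchange_big /=.
under eq_bigr => c _ do under eq_bigr => a _ do rewrite exchange_big /=.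
rewrite exchange_big /=.
by under eq_bigr => a _ do rewrite exchange_big /=.
Qed.

Lemma sum3_swapR (V : zmodType) (U : seq M) (F : M -> M -> M -> V) :
  \sum_(s <- U) \sum_(b <- U) \sum_(c <- U) F s b c =
  \sum_(b <- U) \sum_(c <- U) \sum_(s <- U) F s b c.
Proof.
rewrite exchange_big /=.
by under eq_bigr => b _ do rewrite exchange_big /=.
Qed.

Lemma hconv_assoc f g h : star (star f g) h = star f (star g h).
Proof.
apply: funext => mu.
pose U0 := compo (Sd mu).
pose U := undup (U0 ++ flatten [seq compo (Sd n) | n <- U0]).
have uU : uniq U by apply: undup_uniq.
have U0U n : n \in U0 -> n \in U by move=> nU; rewrite mem_undup mem_cat nU.
have U1U n m : n \in U0 -> m \in compo (Sd n) -> m \in U.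
  move=> nU mn; rewrite mem_undup mem_cat; apply/orP; right.
  by apply/flattenP; exists (compo (Sd n)) => //; apply: map_f.
have SU0 : forall p, p \in Sd mu -> (p.1 \in U) && (p.2 \in U).
  by move=> p pS; rewrite (U0U _ (compo1 pS)) (U0U _ (compo2 pS)).
have SU1 : forall n, n \in U0 -> forall p, p \in Sd n -> (p.1 \in U) && (p.2 \in U).
  by move=> n nU p pS; rewrite (U1U _ _ nU (compo1 pS)) (U1U _ _ nU (compo2 pS)).
pose X a b c := mulB (mulB (f a) (g b)) (h c).
transitivity (\sum_(a <- U) \sum_(b <- U) \sum_(c <- U)
   (\sum_(n <- U) D mu n c * D n a b) *: X a b c).
  rewrite (hconvE mulB Dfin).
  rewrite (@big_pairU _ _ _ U (fun n c => D mu n c *: mulB (star f g n) (h c))) ?fset_uniq //; last first.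
    by move=> p /(notin_Sd Dfin) ->; rewrite scale0r.
  under [RHS]eq_bigr => a _ do under eq_bigr => b _ do under eq_bigr => c _ do rewrite scaler_suml.
  rewrite -sum4_swapL; apply: eq_bigr => n _; apply: eq_bigr => c _.
  have [->|Dnz] := eqVneq (D mu n c) 0.
    by rewrite scale0r big1 // => a _; rewrite big1 // => b _; rewrite mul0r scale0r.
  rewrite (hconvE mulB Dfin).
  rewrite (@big_pairU _ _ _ U (fun a b => D n a b *: mulB (f a) (g b))) ?fset_uniq //; last first.
      by move=> p /(notin_Sd Dfin) ->; rewrite scale0r.
    exact: SU1 (Sd_compo1 Dfin Dnz).
  rewrite (mulB_suml mulDl) scaler_sumr; apply: eq_bigr => a _.
  rewrite (mulB_suml mulDl) scaler_sumr; apply: eq_bigr => b _.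
  by rewrite (mulBZl mulDl) scalerA.
transitivity (\sum_(a <- U) \sum_(b <- U) \sum_(c <- U)
   (\sum_(s <- U) D mu a s * D s b c) *: X a b c).
  apply: eq_bigr => a _; apply: eq_bigr => b _; apply: eq_bigr => c _.
  congr (_ *: _).
  rewrite -(@fsumT_seq _ _ U (fun n => D mu n c * D n a b)) //; last first.
    move=> n nU; apply/eqP; rewrite mulf_eq0; apply/orP; left; apply: contraR nU => hh.
    exact: U0U (Sd_compo1 Dfin hh).
  rewrite -(@fsumT_seq _ _ U (fun s => D mu a s * D s b c)) //.
  move=> s sU; apply/eqP; rewrite mulf_eq0; apply/orP; left; apply: contraR sU => hh.
  exact: U0U (Sd_compo2 Dfin hh).
rewrite [RHS](hconvE mulB Dfin).
rewrite (@big_pairU _ _ _ U (fun a s => D mu a s *: mulB (f a) (star g h s))) ?fset_uniq //; last first.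
  by move=> p /(notin_Sd Dfin) ->; rewrite scale0r.
apply: eq_bigr => a _.
under eq_bigr => b _ do under eq_bigr => c _ do rewrite scaler_suml.
rewrite -sum3_swapR; apply: eq_bigr => s _.
have [->|Dnz] := eqVneq (D mu a s) 0.
  by rewrite scale0r big1 // => b _; rewrite big1 // => c _; rewrite mul0r scale0r.
rewrite (hconvE mulB Dfin).
rewrite (@big_pairU _ _ _ U (fun b c => D s b c *: mulB (g b) (h c))) ?fset_uniq //; last first.
    by move=> p /(notin_Sd Dfin) ->; rewrite scale0r.
  exact: SU1 (Sd_compo2 Dfin Dnz).
rewrite (mulB_sumr mulC mulDl) scaler_sumr; apply: eq_bigr => b _.
rewrite (mulB_sumr mulC mulDl) scaler_sumr; apply: eq_bigr => c _.
by rewrite (mulBZr mulC mulDl) scalerA /X mulA.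
Qed.

End Gen2.

Set Implicit Arguments.
Unset Strict Implicit.
Unset Printing Implicit Defensive.

Section Accum.
Variable K : numFieldType.
Fixpoint accum (d : nat -> K) (m : nat) : K :=
  match m with 0 => 1 + (d 0%N)^-1 | m'.+1 => accum d m' + (d m)^-1 end.

Variable d : nat -> K.
Hypothesis dpos : forall j, 0 < d j.

Lemma accum_ge1 m : 1 <= accum d m.
Proof.
elim: m => [|m IH] /=; first by rewrite lerDl invr_ge0 ltW.
by rewrite (le_trans IH) // lerDl invr_ge0 ltW.
Qed.

Lemma accum_mono m m' : (m <= m')%N -> accum d m <= accum d m'.
Proof.
elim: m' => [|m' IH]; first by rewrite leqn0 => /eqP ->.
rewrite leq_eqVlt => /orP[/eqP -> //|]; rewrite ltnS => /IH h /=.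
by rewrite (le_trans h) // lerDl invr_ge0 ltW.
Qed.

Lemma accum_ge j m : (j <= m)%N -> (d j)^-1 <= accum d m.
Proof.
move=> jm; apply: (le_trans _ (accum_mono jm)).
case: j {jm} => [|j] /=; first by rewrite lerDr.
by rewrite lerDr (le_trans _ (accum_ge1 j)).
Qed.

Definition theta m := (accum d m)^-1.

Lemma accum_gt0 m : 0 < accum d m.
Proof. exact: lt_le_trans ltr01 (accum_ge1 m). Qed.

Lemma theta_gt0 m : 0 < theta m.
Proof. by rewrite invr_gt0 accum_gt0. Qed.

Lemma theta_le1 m : theta m <= 1.
Proof. by rewrite /theta invr_le1 ?accum_ge1 ?unitf_gt0 ?accum_gt0. Qed.

Lemma theta_le j m : (j <= m)%N -> theta m <= d j.
Proof.
move=> jm; rewrite /theta -[d j]invrK lef_pV2 ?posrE ?invr_gt0 ?accum_gt0 //.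
exact: accum_ge.
Qed.

Lemma theta_anti m m' : (m <= m')%N -> theta m' <= theta m.
Proof.
by move=> h; rewrite /theta lef_pV2 ?posrE ?accum_gt0 // accum_mono.
Qed.
End Accum.

Section Gen3.
Variables (K : numFieldType) (M : choiceType) (gr : M -> nat)
  (w : nat -> nat -> nat) (B : normedModType K) (mulB : B -> B -> B)
  (D : M -> M -> M -> K).
Hypothesis mulC : commutative mulB.
Hypothesis mulDl : forall (a : K) x y z, mulB (a *: x + y) z = a *: mulB x z + mulB y z.
Hypothesis mulN : forall x y, `|mulB x y| <= `|x| * `|y|.
Hypothesis Dfin : forall mu, finite_set [set p : M * M | D mu p.1 p.2 != 0].
Hypothesis hw0 : forall k n, (0 < w k n)%N.
Hypothesis hwS : forall k n, (w k n <= w k.+1 n)%N.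
Variables (kk : nat -> nat) (CC : nat -> K).
Hypothesis CCpos : forall k, 0 < CC k.
Hypothesis Dbound : forall k mu,
  \sum_(p <- Sd D mu) `|D mu p.1 p.2| * (w k (gr p.1))%:R * (w k (gr p.2))%:R
    <= CC k * (w (kk k) (gr mu))%:R.

Local Notation star := (hconv D mulB).
Local Notation bb := (@bounded_by K M gr w B).
Local Notation E := (controlled gr w (B := B)).

Lemma w_mono k k' n : (k <= k')%N -> (w k n <= w k' n)%N.
Proof.
elim: k' => [|k' IH]; first by rewrite leqn0 => /eqP ->.
rewrite leq_eqVlt => /orP[/eqP -> //|]; rewrite ltnS => /IH h.
exact: leq_trans h (hwS _ _).
Qed.

Lemma wR_gt0 k n : 0 < (w k n)%:R :> K.
Proof. by rewrite ltr0n. Qed.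

Lemma bb_ge0 k (C : K) (f : M -> B) (t : M) : bb k C f -> 0 <= C.
Proof.
move=> h; have := h t; rewrite -(pmulr_lge0 _ (wR_gt0 k (gr t))).
exact: le_trans (normr_ge0 _).
Qed.

Lemma bb_mono k k' (C C' : K) (f : M -> B) : (k <= k')%N -> C <= C' -> bb k C f -> bb k' C' f.
Proof.
move=> kk' CC' h t; apply: (le_trans (h t)).
have C0 := bb_ge0 t h.
apply: ler_pM => //.
by rewrite ler_nat w_mono.
Qed.

Lemma conv_bound k (X Y : K) (x y : M -> B) : bb k X x -> bb k Y y ->
  bb (kk k) (X * Y * CC k) (star x y).
Proof.
move=> hx hy mu; have X0 := bb_ge0 mu hx; have Y0 := bb_ge0 mu hy.
rewrite (hconvE mulB Dfin); apply: (le_trans (ler_norm_sum _ _ _)).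
apply: le_trans (_ : \sum_(p <- Sd D mu) `|D mu p.1 p.2| *
    ((X * (w k (gr p.1))%:R) * (Y * (w k (gr p.2))%:R)) <= _).
  apply: ler_sum => p _; rewrite normrZ ler_wpM2l //.
  apply: le_trans (mulN _ _) _; apply: ler_pM => //.
have -> : \sum_(p <- Sd D mu) `|D mu p.1 p.2| *
    ((X * (w k (gr p.1))%:R) * (Y * (w k (gr p.2))%:R)) = X * Y * \sum_(p <- Sd D mu) `|D mu p.1 p.2| *
    (w k (gr p.1))%:R * (w k (gr p.2))%:R.
  rewrite mulr_sumr; apply: eq_bigr => p _.
  by ring.
by rewrite -[X * Y * CC k * _]mulrA; apply: ler_wpM2l (Dbound k mu); rewrite mulr_ge0.
Qed.

Lemma bb_lin k (a b X Y : K) (x y : M -> B) : bb k X x -> bb k Y y ->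
  bb k (`|a| * X + `|b| * Y) (fun t => a *: x t + b *: y t).
Proof.
move=> hx hy t; apply: (le_trans (ler_normD _ _)); rewrite !normrZ mulrDl.
by apply: lerD; rewrite -mulrA ler_wpM2l.
Qed.

Lemma E_lin (a b : K) x y : E x -> E y -> E (fun t => a *: x t + b *: y t).
Proof.
move=> [k1 [C1 h1]] [k2 [C2 h2]]; exists (k1 + k2)%N, (`|a| * C1 + `|b| * C2).
by apply: bb_lin; [apply: (bb_mono (leq_addr k2 k1) (le_refl _) h1) | apply: (bb_mono (leq_addl k1 k2) (le_refl _) h2)].
Qed.

Lemma E_star x y : E x -> E y -> E (star x y).
Proof.
move=> [k1 [C1 h1]] [k2 [C2 h2]]; exists (kk (k1 + k2)), (C1 * C2 * CC (k1 + k2)).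
by apply: conv_bound; [apply: (bb_mono (leq_addr k2 k1) (le_refl _) h1) | apply: (bb_mono (leq_addl k1 k2) (le_refl _) h2)].
Qed.

Lemma comb3 (V : lmodType K) (A Bv C Dv : V) :
  (1 *: (1 *: A + 1 *: Bv) + 1 *: (1 *: C + 1 *: Dv)) - A =
  3%:R^-1 *: (3%:R *: Bv) + (2%:R / 3%:R) *: (2%:R^-1 *: (3%:R *: C) + 2%:R^-1 *: (3%:R *: Dv)).
Proof.
have h3 : (3%:R : K) != 0 by rewrite pnatr_eq0.
have h2 : (2%:R : K) != 0 by rewrite pnatr_eq0.
have e1 : (3%:R : K)^-1 * 3%:R = 1 by rewrite mulVf.
have e2 : (2%:R / 3%:R : K) * 2%:R^-1 * 3%:R = 1 by field.
rewrite [(2%:R / 3%:R) *: _]scalerDr !scalerA e1 e2 !scale1r.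
by rewrite addrAC (addrAC A) subrr add0r.
Qed.

Variable t0 : M.

Lemma star_cont f g : E f -> E g -> forall W, ind_nbhd0 gr w W -> exists U V,
  [/\ ind_nbhd0 gr w U, ind_nbhd0 gr w V &
    forall u v, E u -> E v -> U u -> V v ->
      W (fun t => star (fun x => f x + u x) (fun x => g x + v x) t - star f g t)].
Proof.
move=> [jf [F hf]] [jg [G hg]] W [V0 [V0W V0E V0c V0b]].
have [e he] := choice V0b.
have F0 : 0 <= F := bb_ge0 t0 hf.
have G0 : 0 <= G := bb_ge0 t0 hg.
pose N := (jf + jg)%N.
pose P (x : M -> B) := V0 (fun t => 3%:R *: x t).
pose del m := e (kk m) / (3%:R * CC m).
have epos m : 0 < e m by case: (he m).
have delpos m : 0 < del m.
  by rewrite divr_gt0 ?mulr_gt0 ?ltr0n.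
pose th := theta del.
pose rho := (1 + F + G)^-1.
have S0 : 0 < 1 + F + G by rewrite (lt_le_trans ltr01) // -addrA lerDl addr_ge0.
have rho0 : 0 < rho by rewrite invr_gt0.
have rhoF : rho * F <= 1.
  rewrite mulrC ler_pdivrMr // mul1r.
  by rewrite (addrC 1) -addrA lerDl addr_ge0.
have rhoG : rho * G <= 1.
  by rewrite mulrC ler_pdivrMr // mul1r lerDr addr_ge0.
have rho1 : rho <= 1.
  by rewrite invr_le1 ?unitf_gt0 // -addrA lerDl addr_ge0.
pose a k := rho * th (k + N)%N.
have apos k : 0 < a k by rewrite mulr_gt0 // theta_gt0.
have ale k : a k <= th (k + N)%N.
  by rewrite /a -[X in _ <= X]mul1r ler_wpM2r // ltW // theta_gt0.
have Pabs : forall (al be : K) x y, P x -> P y -> `|al| + `|be| <= 1 ->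
    P (fun t => al *: x t + be *: y t).
  move=> al be x y Px Py hab; rewrite /P.
  have -> : (fun t => 3%:R *: (al *: x t + be *: y t)) =
            (fun t => al *: (3%:R *: x t) + be *: (3%:R *: y t)).
    by apply: funext => t; rewrite scalerDr !scalerA (mulrC al) (mulrC be).
  exact: V0c.
have Pball : forall j x, bb j (e j / 3%:R) x -> P x.
  move=> j x hx; apply: (proj2 (he j)) => t; rewrite normrZ normr_nat.
  by rewrite -ler_pdivlMl ?ltr0n // mulrA (mulrC _ (e j)) hx.
have key : forall m (al be : K) x y, bb m al x -> bb m be y -> al * be <= del m ->
    P (star x y).
  move=> m al be x y hx hy hab; apply: (Pball (kk m)).
  apply: bb_mono (leqnn _) _ (conv_bound hx hy).
  rewrite -(ler_pM2r (CCpos m)) in hab; apply: le_trans hab _.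
  by rewrite /del invfM mulrA divfK ?gt_eqF.
pose U := fun u => E u /\ P (star u g) /\ forall l v, bb l (a l) v -> P (star u v).
pose Vv := fun v => E v /\ P (star f v) /\ forall u, U u -> P (star u v).
exists U, Vv; split.
- exists U; split => //; first by move=> u [].
    move=> al be u1 u2 [E1 [P1 Q1]] [E2 [P2 Q2]] hab; split; first exact: E_lin.
    split; first by rewrite (hconv_linl mulDl Dfin); apply: Pabs.
    by move=> l v hv; rewrite (hconv_linl mulDl Dfin); apply: Pabs => //; [apply: Q1|apply: Q2].
  move=> k; exists (a k); split => // u hu; split; first by exists k, (a k).
  split.
    apply: (key (k + N)%N (a k) G); first by apply: bb_mono hu; rewrite ?leq_addr.
      by apply: bb_mono hg; rewrite /N ?leq_addr ?leq_addl // addnA leq_addl.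
    rewrite /a mulrAC; apply: (le_trans _ (theta_le delpos (leqnn _))).
    by rewrite -[X in _ <= X]mul1r; apply: ler_wpM2r => //; exact: ltW (theta_gt0 delpos _).
  move=> l v hv; apply: (key (maxn k l + N)%N (a k) (a l)).
  + by apply: bb_mono hu; rewrite ?leq_addr // (leq_trans (leq_maxl k l)) ?leq_addr.
  + by apply: bb_mono hv; rewrite ?leq_addr // (leq_trans (leq_maxr k l)) ?leq_addr.
  + apply: (le_trans _ (theta_le delpos (leqnn _))).
    apply: le_trans (_ : th (k + N)%N * th (l + N)%N <= _).
      by apply: ler_pM => //; apply: ltW.
    case: (leqP k l) => hkl.
      rewrite -[X in _ <= X]mul1r.
      by apply: ler_wpM2r; [exact: ltW (theta_gt0 delpos _) | exact: theta_le1].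
    rewrite -[X in _ <= X]mulr1.
    by apply: ler_wpM2l; [exact: ltW (theta_gt0 delpos _) | exact: theta_le1].
- exists Vv; split => //; first by move=> v [].
    move=> al be v1 v2 [E1 [P1 Q1]] [E2 [P2 Q2]] hab; split; first exact: E_lin.
    split; first by rewrite (hconv_linr mulC mulDl Dfin); apply: Pabs.
    by move=> u hu; rewrite (hconv_linr mulC mulDl Dfin); apply: Pabs => //; [apply: Q1|apply: Q2].
  move=> l; exists (a l); split => // v hv; split; first by exists l, (a l).
  split; last by move=> u [_ [_ hu]]; apply: hu hv.
  apply: (key (l + N)%N F (a l)).
  + by apply: bb_mono hf; rewrite /N // addnCA leq_addr.
  + by apply: bb_mono hv; rewrite ?leq_addr.
  + rewrite /a mulrA (mulrC F); apply: (le_trans _ (theta_le delpos (leqnn _))).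
    by rewrite -[X in _ <= X]mul1r; apply: ler_wpM2r => //; exact: ltW (theta_gt0 delpos _).
- move=> u v Eu Ev Uu [_ [Pfv Hv]]; have Puv := Hv u Uu; have Pug := Uu.2.1.
  apply: V0W.
  have e1 : (fun x => f x + u x) = (fun x => 1 *: f x + 1 *: u x).
    by apply: funext => x; rewrite !scale1r.
  have e2 : (fun x => g x + v x) = (fun x => 1 *: g x + 1 *: v x).
    by apply: funext => x; rewrite !scale1r.
  have -> : (fun t => star (fun x => f x + u x) (fun x => g x + v x) t - star f g t) =
    (fun t => 3%:R^-1 *: (3%:R *: star f v t) + (2%:R / 3%:R) *:
       (2%:R^-1 *: (3%:R *: star u g t) + 2%:R^-1 *: (3%:R *: star u v t))).
    apply: funext => t; rewrite e1 e2 (hconv_linl mulDl Dfin).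
    by rewrite !(hconv_linr mulC mulDl Dfin) comb3.
  have n3 : `|(3%:R : K)^-1| = 3%:R^-1 by rewrite ger0_norm // invr_ge0 ler0n.
  have n2 : `|(2%:R : K)^-1| = 2%:R^-1 by rewrite ger0_norm // invr_ge0 ler0n.
  have n23 : `|(2%:R / 3%:R : K)| = 2%:R / 3%:R by rewrite ger0_norm // divr_ge0 ?ler0n.
  have h3 : (3%:R : K) != 0 by rewrite pnatr_eq0.
  have h2 : (2%:R : K) != 0 by rewrite pnatr_eq0.
  apply: (V0c) => //.
    apply: V0c; [exact: Pug | exact: Puv | ].
    by rewrite n2 [X in X <= _](_ : _ = 1) //; field.
  by rewrite n3 n23 [X in X <= _](_ : _ = 1) //; field.
Qed.

End Gen3.

Set Implicit Arguments.
Unset Strict Implicit.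
Unset Printing Implicit Defensive.

Definition rK (R : realType) (cplx : bool) : R -> scal_field R cplx :=
  match cplx return R -> scal_field R cplx with
  | true => fun x : R => (real_complex R x : R[i])
  | false => fun x : R => x
  end.

Section RK.
Variables (R : realType) (cplx : bool).
Local Notation K := (scal_field R cplx).
Local Notation rK := (@rK R cplx).

Lemma rK_norm (a : K) : rK (knorm a) = `|a|.
Proof. by case: cplx a => a //=; rewrite normc_def. Qed.

Lemma rKD x y : rK (x + y) = rK x + rK y.
Proof. by case: cplx => //=; rewrite rmorphD. Qed.

Lemma rKM x y : rK (x * y) = rK x * rK y.
Proof. by case: cplx => //=; rewrite rmorphM. Qed.

Lemma rK0 : rK 0 = 0.
Proof. by case: cplx. Qed.

Lemma rKn n : rK n%:R = n%:R.
Proof. by case: cplx => //=; rewrite rmorph_nat. Qed.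

Lemma rK_le x y : (rK x <= rK y) = (x <= y).
Proof. by case: cplx => //=; rewrite lecR. Qed.

Lemma rK_lt x y : (rK x < rK y) = (x < y).
Proof. by case: cplx => //=; rewrite ltcR. Qed.

Lemma rK_inj : injective rK.
Proof. by move=> x y h; apply/eqP; rewrite eq_le -!rK_le h lexx. Qed.

Lemma rK_sum (I : Type) (r : seq I) (F : I -> R) :
  rK (\sum_(i <- r) F i) = \sum_(i <- r) rK (F i).
Proof. by elim: r => [|x r IH]; rewrite ?big_nil ?rK0 // !big_cons rKD IH. Qed.

Lemma knormM (a b : K) : knorm (a * b) = knorm a * knorm b.
Proof. by apply: rK_inj; rewrite rKM !rK_norm normrM. Qed.

Lemma knorm0 : knorm (0 : K) = 0.
Proof. by apply: rK_inj; rewrite rK_norm normr0 rK0. Qed.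

Lemma knorm_ge0 (a : K) : 0 <= knorm a.
Proof. by rewrite -(rK_le 0) rK0 rK_norm. Qed.

Lemma knorm_rK x : 0 <= x -> knorm (rK x) = x.
Proof.
move=> x0; apply: rK_inj; rewrite rK_norm ger0_norm //.
by rewrite -rK0 rK_le.
Qed.

End RK.

Lemma esum_single (R : realType) (T : choiceType) (mu : T) (a : T -> \bar R) :
  (forall t, t != mu -> a t = 0%E) -> (0 <= a mu)%E ->
  \esum_(t in [set: T]) a t = a mu.
Proof.
move=> a0 amu; rewrite -(esum_set1 amu) [RHS]esum_mkcond; apply: eq_esum => t _.
case: (eqVneq t mu) => [->|ht]; first by rewrite ifT // mem_set.
by rewrite ifF ?a0 //; apply/negbTE/negP => /set_mem h; move/eqP: ht.
Qed.

Lemma Dbound_of_ext (R : realType) (cplx : bool) (M : choiceType) (gr : M -> nat)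
  (w : nat -> nat -> nat) (D : M -> M -> M -> scal_field R cplx) :
  (forall k n, (0 < w k n)%N) ->
  (forall k n m, (w k n * w k m <= w k (n + m))%N) ->
  (forall mu, finite_set [set p : M * M | D mu p.1 p.2 != 0]) ->
  extends_continuously gr (fun p : M * M => (gr p.1 + gr p.2)%N) w
    (fun mu p => D mu p.1 p.2) ->
  forall k, exists k' (C : scal_field R cplx), 0 < C /\ forall mu,
    \sum_(p <- Sd D mu) `|D mu p.1 p.2| * (w k (gr p.1))%:R * (w k (gr p.2))%:R
      <= C * (w k' (gr mu))%:R.
Proof.
move=> hw0 hwM Dfin [T [Tl1 Tlin Tfin Tcont]] k.
have l10 : in_l1_proj gr w (fun _ : M => 0 : scal_field R cplx).
  move=> j; rewrite /in_l1 /l1norm esum1 ?ltry // => t _.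
  by rewrite knorm0 mul0r.
have [k' [d [d0 Hd]]] := Tcont (fun _ => 0) k 1 l10 ltr01.
exists k', (rK cplx (2 / d)); split; first by rewrite -(rK0 R cplx) rK_lt divr_gt0.
move=> mu.
pose wm : R := (w k' (gr mu))%:R.
have wm0 : 0 < wm by rewrite ltr0n.
pose lam := d / (2 * wm).
have lam0 : 0 < lam by rewrite divr_gt0 // mulr_gt0.
pose c' := fun t : M => if t == mu then rK cplx lam else 0.
have c'fin : fin_supp c'.
  apply: (sub_finite_set _ (finite_set1 mu)) => t /=; rewrite /c'.
  by case: (eqVneq t mu) => // _; rewrite eqxx.
have l1c' j : l1norm gr w j c' = (lam * (w j (gr mu))%:R)%:E.
  rewrite /l1norm (@esum_single _ _ mu).
  - by rewrite /c' eqxx knorm_rK // ltW.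
  - by move=> t /negbTE h; rewrite /c' h knorm0 mul0r.
  - by rewrite lee_fin mulr_ge0 ?knorm_ge0.
have c'l1 : in_l1_proj gr w c' by move=> j; rewrite /in_l1 l1c' ltry.
have hlt : (l1norm gr w k' (fun t => (c' t - 0)%R) < d%:E)%E.
  rewrite (_ : (fun t => c' t - 0) = c'); last by apply: funext => t; rewrite subr0.
  rewrite l1c' lte_fin -/wm /lam invfM mulrA divfK ?gt_eqF //; lra.
have := Hd c' c'l1 hlt.
have T0 : T (fun _ => 0) = fun _ => 0.
  rewrite Tfin; last by apply: (sub_finite_set _ (finite_set1 mu)) => t /=; rewrite eqxx.
  by apply: funext => u; rewrite fsbig1 // => t _; rewrite mul0r.
have Tc' : T c' = fun u => rK cplx lam * D mu u.1 u.2.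
  rewrite Tfin //; apply: funext => u; rewrite (@fsumT_seq _ _ [:: mu]) ?big_seq1 /c' ?eqxx //.
  by move=> t; rewrite inE => /negbTE ->; rewrite mul0r.
rewrite T0 Tc' => H1.
pose S12 := \sum_(p <- Sd D mu) knorm (D mu p.1 p.2) * (w k (gr p.1 + gr p.2))%:R.
have Hlow : ((lam * S12)%:E <= l1norm (fun p : M * M => (gr p.1 + gr p.2)%N) w k
     (fun u => (rK cplx lam * D mu u.1 u.2 - 0)%R))%E.
  rewrite /l1norm; apply: esum_ge; exists [set` Sd D mu]%classic; first by split; [exact: finite_fset | by []].
  rewrite -fsbig_seq ?fset_uniq // sumEFin lee_fin /S12 mulr_sumr.
  apply: ler_sum => p _; rewrite subr0 knormM knorm_rK ?mulrA //; exact: ltW.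
have Hs := le_lt_trans Hlow H1; rewrite lte_fin -ltr_pdivlMl // mulr1 in Hs.
have e1 : lam^-1 = 2 / d * wm.
  by rewrite /lam invf_div mulrAC.
rewrite e1 in Hs.
have -> : \sum_(p <- Sd D mu) `|D mu p.1 p.2| * (w k (gr p.1))%:R * (w k (gr p.2))%:R =
   rK cplx (\sum_(p <- Sd D mu) knorm (D mu p.1 p.2) * (w k (gr p.1))%:R * (w k (gr p.2))%:R).
  by rewrite rK_sum; apply: eq_bigr => p _; rewrite !rKM rK_norm !rKn.
rewrite -(rKn R cplx) -rKM rK_le; apply: le_trans (ltW Hs).
apply: ler_sum => p _; rewrite -mulrA ler_wpM2l ?knorm_ge0 //.
by rewrite -natrM ler_nat hwM.
Qed.

Unset Implicit Arguments.

Theorem proposition3p9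
  (R : realType) (cplx : bool)
  (B : completeNormedModType (scal_field R cplx))
  (mulB : B -> B -> B) (oneB : B)
  (w : nat -> nat -> nat)
  (comm : bool) (Sig : choiceType) (deg : Sig -> nat)
  (D : mon comm Sig -> mon comm Sig -> mon comm Sig -> scal_field R cplx)
  (ep : mon comm Sig -> scal_field R cplx)
  (Sa : mon comm Sig -> mon comm Sig -> scal_field R cplx) :
  comm_banach_alg mulB oneB ->
  growth_family w -> convex_growth R w ->
  comb_hopf deg D ep Sa ->
  (* control pair *)
  extends_continuously (mon_deg deg)
    (fun p : mon comm Sig * mon comm Sig => (mon_deg deg p.1 + mon_deg deg p.2)%N)
    w (fun mu p => D mu p.1 p.2) ->
  extends_continuously (mon_deg deg) (mon_deg deg) w Sa ->
  lc_unital_top_alg (mon_deg deg) w (hconv D mulB) (fun mu => ep mu *: oneB).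
Proof.
move=> [mulA mulC mul1 mulDl [mulN norm1]] [hw0 hw1 hwS hwM hw3] _ hopf hD _.
case: hopf => Dfin [_ [coass [counitl [counitr [_ [_ [_ [epone [_ [_ [Dgr [epgr conn]]]]]]]]]]]].
have ep1 mu : ep mu != 0 -> mu = mon_one comm Sig by move=> h; apply: conn; apply: epgr.
have [kk hkk] := choice (Dbound_of_ext hw0 hwM Dfin hD).
have [CC hCC] := choice hkk.
have CCpos k : 0 < CC k by case: (hCC k).
have Dbound k mu := proj2 (hCC k) mu.
split.
- split; first by move=> f g Ef Eg; apply: (E_star mulN Dfin hw0 hwS Dbound).
  exists 0%N, 1 => mu; rewrite normrZ.
  case: (eqVneq (ep mu) 0) => [->|h].
    by rewrite normr0 mul0r mul1r ler0n.
  by rewrite (ep1 mu h) epone normr1 mul1r norm1 mul1r ler1n.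
- by move=> f g h _ _ _; apply: (hconv_assoc mulA mulC mulDl Dfin coass).
- move=> f _; split.
    exact: (hconv_unitl mul1 mulDl Dfin counitl).
  exact: (hconv_unitr mulC mul1 mulDl Dfin counitr).
- split.
    move=> a f f' g _ _ _.
    have -> : (fun t => a *: f t + f' t) = (fun t => a *: f t + 1 *: f' t).
      by apply: funext => t; rewrite scale1r.
    rewrite (hconv_linl mulDl Dfin); apply: funext => mu; by rewrite scale1r.
  move=> a f g g' _ _ _.
  have -> : (fun t => a *: g t + g' t) = (fun t => a *: g t + 1 *: g' t).
    by apply: funext => t; rewrite scale1r.
  rewrite (hconv_linr mulC mulDl Dfin); apply: funext => mu; by rewrite scale1r.
- move=> f g Ef Eg W hW.
  exact: (star_cont mulC mulDl mulN Dfin hw0 hwS CCpos Dbound (mon_one comm Sig) Ef Eg hW).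
Qed.
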